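(* Let $D=\{x\in X : \langle a,x\rangle=\beta\}$ with $X=[\alpha'_1,\alpha''_1]\times\cdots\times[\alpha'_n,\alpha''_n]$, where $\alpha'_i<\alpha''_i$ are finite, $a=(a_1,\dots,a_n)^\top$ has $a_i>0$ for all $i\in I=\{1,\dots,n\}$, $\beta\in\mathbb{R}$, and $D\neq\varnothing$. Let $f:\mathbb{R}^n\to\mathbb{R}$ be locally Lipschitz on $X$. Then for a point $x^*$ the following are equivalent: (1) $x^*\in D$ and there exists $g^*\in\partial^{\uparrow}f(x^* )$ such that $\langle g^*,x-x^*\rangle\ge 0$ for all $x\in D$ (i.e. $x^*$ solves the variational inequality (VI)); (2) $x^*\in D$ and there exist $g^*\in\partial^{\uparrow}f(x^* )$ and $\lambda\in\mathbb{R}$ such that $\langle g^*-\lambda a,x-x^*\rangle\ge0$ for all $x\in X$; (3) $x^*\in D$ and there exist $g^*\in\partial^{\uparrow}f(x^* )$ and $\lambda\in\mathbb{R}$ such that for each $i\in I$: $(1/a_i)g^*_i\ge\lambda$ if $x^*_i=\alpha'_i$; $(1/a_i)g^*_i=\lambda$ if $x^*_i\in(\alpha'_i,\alpha''_i)$; $(1/a_i)g^*_i\le\lambda$ if $x^*_i=\alpha''_i$; (4) $x^*\in D$ and there exists $g^*\in\partial^{\uparrow}f(x^* )$ such that for all $i,j\in I$, $i\ne j$: if $(1/a_i)g^*_i>(1/a_j)g^*_j$ then $x^*_i=\alpha'_i$ or $x^*_j=\alpha''_j$; (5) $x^*\in D$ and there exists $g^*\in\partial^{\uparrow}f(x^*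 )$ such that for all $i,j\in I$, $i\neq j$: if $x^*_i\in(\alpha'_i,\alpha''_i]$ and $x^*_j\in[\alpha'_j,\alpha''_j)$ then $(1/a_i)g^*_i\le(1/a_j)g^*_j$.
   Context: For $f$ Lipschitz continuous near $x$, the upper Clarke–Rockafellar derivative is $f^{\uparrow}(x;p)=\limsup_{y\to x,\ \alpha\searrow0}(f(y+\alpha p)-f(y))/\alpha$, and the (Clarke) generalized gradient is $\partial^{\uparrow}f(x)=\{g\in\mathbb{R}^n:\langle g,p\rangle\le f^{\uparrow}(x;p)\ \forall p\in\mathbb{R}^n\}$, a nonempty convex compact set. *)

(* Defs.v *)
From Stdlib Require Import Reals.
From mathcomp Require Import ssreflect ssrfun ssrbool eqtype ssrnat seq fintype bigop.

Open Scope R_scope.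

Definition vec (n : nat) := 'I_n -> R.

Definition inner {n : nat} (u v : vec n) : R := \big[Rplus/0]_(i < n) (u i * v i).
Definition vnorm {n : nat} (u : vec n) : R := sqrt (inner u u).
Definition vadd {n : nat} (u v : vec n) : vec n := fun i => u i + v i.
Definition vsub {n : nat} (u v : vec n) : vec n := fun i => u i - v i.
Definition vscale {n : nat} (c : R) (u : vec n) : vec n := fun i => c * u i.

Definition lipschitz_near {n : nat} (f : vec n -> R) (x : vec n) : Prop :=
  exists L delta, 0 < delta /\
    forall y z, vnorm (vsub y x) < delta -> vnorm (vsub z x) < delta ->
      Rabs (f y - f z) <= L * vnorm (vsub y z).

(* c <= f^{up}(x;p) = limsup_{y -> x, alpha \searrow 0} (f(y+alpha p) - f(y))/alpha,
   i.e. the literal unfolding of "c <= limsup": for every neighbourhood radius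
   delta, the supremum of the quotient over the delta-neighbourhood is >= c. *)
Definition clarke_ge {n : nat} (c : R) (f : vec n -> R) (x p : vec n) : Prop :=
  forall eps delta, 0 < eps -> 0 < delta ->
    exists y alpha, vnorm (vsub y x) < delta /\ 0 < alpha < delta /\
      c - eps < (f (vadd y (vscale alpha p)) - f y) / alpha.

Definition clarke_subdiff {n : nat} (f : vec n -> R) (x g : vec n) : Prop :=
  forall p : vec n, clarke_ge (inner g p) f x p.

Definition in_box {n : nat} (lo hi : vec n) (x : vec n) : Prop :=
  forall i, lo i <= x i <= hi i.
Definition in_D {n : nat} (lo hi a : vec n) (beta : R) (x : vec n) : Prop :=
  in_box lo hi x /\ inner a x = beta.

(* Main.v *)
Require Import Defs.
From Stdlib Require Import Reals Lra.
From HB Require Import structures.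
From mathcomp Require Import ssreflect ssrfun ssrbool eqtype ssrnat seq fintype bigop.
Open Scope R_scope.
HB.instance Definition _ := Monoid.isComLaw.Build R 0 Rplus (fun x y z => esym (Rplus_assoc x y z)) Rplus_comm Rplus_0_l.

Lemma big_lin (n : nat) (F G : 'I_n -> R) c d : \big[Rplus/0]_(k<n) (c*F k + d*G k) = c*\big[Rplus/0]_(k<n) F k + d*\big[Rplus/0]_(k<n) G k.
Proof. elim/big_rec3: _ => [|k x y z _ ->]; ring. Qed.

Lemma inner_ext n (u v w : vec n) : (forall k, u k * w k = v k) -> inner u w = \big[Rplus/0]_(k<n) v k.
Proof. move=> H; apply: eq_bigr => k _; apply H. Qed.
Arguments inner_ext {n u} v {w}.

Lemma inner_subl n (g a w : vec n) lam : inner (vsub g (vscale lam a)) w = inner g w - lam * inner a w.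
Proof.
rewrite (inner_ext (fun k => 1 * (g k * w k) + (-lam) * (a k * w k))).
  rewrite big_lin /inner; ring.
move=> k; rewrite /vsub /vscale; ring.
Qed.

Lemma inner_subr n (u x y : vec n) : inner u (vsub x y) = inner u x - inner u y.
Proof.
rewrite (inner_ext (fun k => 1 * (u k * x k) + (-1) * (u k * y k))).
  rewrite big_lin /inner; ring.
move=> k; rewrite /vsub; ring.
Qed.

Definition ev {n} (i : 'I_n) (c : R) : vec n := fun k => if k == i then c else 0.

Lemma inner_e2 n (u : vec n) (i j : 'I_n) (c d : R) : i <> j ->
  inner u (fun k => ev i c k + ev j d k) = u i * c + u j * d.
Proof.
move=> ij; rewrite /inner (bigD1 i) //= (bigD1 j) /=; last by apply/eqP => E; apply ij.
rewrite big1 => [|k /andP [/negbTE k1 /negbTE k2]].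
  rewrite /ev eqxx.
  have -> : (j == i) = false by apply/eqP => E; apply ij.
  have -> : (i == j) = false by apply/eqP => E; apply ij.
  rewrite eqxx; ring.
rewrite /ev k1 k2; ring.
Qed.

Lemma sum_ge0 n (F : 'I_n -> R) : (forall k, 0 <= F k) -> 0 <= \big[Rplus/0]_(k<n) F k.
Proof. move=> H; apply: (big_ind (fun x => 0 <= x)); [lra| move=> x y; lra | move=> k _; apply H]. Qed.

Lemma bigRmax_ge (I : eqType) (s : seq I) (P : pred I) (F : I -> R) c i :
  i \in s -> P i -> F i <= \big[Rmax/c]_(k <- s | P k) F k.
Proof.
elim: s => // x s IH; rewrite inE big_cons => /orP [/eqP ->|H] Pi.
  rewrite Pi; apply Rmax_l.
case: (P x); last by apply IH.
eapply Rle_trans; [apply IH => //|apply Rmax_r].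
Qed.

Section S.
Variables (n : nat) (lo hi a : vec n) (beta : R) (xs g : vec n).
Hypothesis Hlohi : forall i, lo i < hi i.
Hypothesis Ha : forall i, 0 < a i.
Hypothesis HxD : in_D lo hi a beta xs.

Lemma L21 lam : (forall x, in_box lo hi x -> 0 <= inner (vsub g (vscale lam a)) (vsub x xs)) ->
  forall x, in_D lo hi a beta x -> 0 <= inner g (vsub x xs).
Proof.
move=> H x [Hx Ex]; have := H x Hx; rewrite inner_subl !inner_subr Ex.
case: HxD => _ ->; lra.
Qed.

Lemma L32 lam : (forall i, (xs i = lo i -> g i / a i >= lam) /\
                  (lo i < xs i < hi i -> g i / a i = lam) /\
                  (xs i = hi i -> g i / a i <= lam)) ->
  forall x, in_box lo hi x -> 0 <= inner (vsub g (vscale lam a)) (vsub x xs).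
Proof.
move=> H x Hx; apply sum_ge0 => k; rewrite /vsub /vscale.
have [H1 [H2 H3]] := H k; have := Hx k; case: HxD => Hb _; have := Hb k.
have ak := Ha k.
have E : g k - lam * a k = a k * (g k / a k - lam) by field; lra.
rewrite E.
move=> [l1 l2] [m1 m2].
case: l1 => l1; last first.
  have := H1 (esym l1); move: l1 => <- ?.
  apply Rmult_le_pos; [apply Rmult_le_pos; lra| lra].
case: l2 => l2.
  rewrite (H2 (conj l1 l2)); lra.
have := H3 l2; rewrite l2 => ?.
replace (a k * (g k / a k - lam) * (x k - hi k)) with (a k * ((lam - g k / a k) * (hi k - x k))) by ring.
apply Rmult_le_pos; [lra| apply Rmult_le_pos; lra].
Qed.

Lemma L14 : (forall x, in_D lo hi a beta x -> 0 <= inner g (vsub x xs)) ->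
  forall i j, i <> j -> g i / a i > g j / a j -> xs i = lo i \/ xs j = hi j.
Proof.
move=> H i j ij gij.
case: HxD => Hb Eb.
have [li hi_] := Hb i; have [lj hj] := Hb j.
case: li => li; last by left.
case: hj => hj; last by right.
exfalso.
have ai := Ha i; have aj := Ha j.
set t := Rmin (a i * (xs i - lo i)) (a j * (hi j - xs j)).
have t1 : t <= a i * (xs i - lo i) by apply Rmin_l.
have t2 : t <= a j * (hi j - xs j) by apply Rmin_r.
have t0 : 0 < t by apply Rmin_pos; apply Rmult_lt_0_compat; lra.
set u := t / a i. set v := t / a j.
have Eu : t = a i * u by rewrite /u; field; lra.
have Ev : t = a j * v by rewrite /v; field; lra.
set d : vec n := fun k => ev i (-u) k + ev j v k.
set x : vec n := fun k => xs k + d k.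
have Hx : in_D lo hi a beta x.
  split.
    move=> k; rewrite /x /d /ev.
    have [lk hk] := Hb k.
    case: eqP => [->|ki]; case: eqP => [kj|kj].
    - by exfalso; apply ij.
    - nra.
    - rewrite kj; nra.
    - lra.
  rewrite -Eb.
  rewrite (inner_ext (fun k => 1 * (a k * xs k) + 1 * (a k * d k))).
    have := @inner_e2 _ a _ _ (-u) v ij; rewrite /inner => E2.
    rewrite big_lin /d E2; nra.
  move=> k; rewrite /x; ring.
have := H x Hx.
rewrite (inner_ext (fun k => g k * d k)); last by move=> k; rewrite /vsub /x; f_equal; ring.
rewrite /d.
have := @inner_e2 _ g _ _ (-u) v ij; rewrite /inner => ->.
have : g i / a i * t > g j / a j * t by apply Rmult_gt_compat_r.
have -> : g i / a i * t = g i * u by rewrite Eu /u; field; lra.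
have -> : g j / a j * t = g j * v by rewrite /v; field; lra.
lra.
Qed.

Lemma L45 : (forall i j, i <> j -> g i / a i > g j / a j -> xs i = lo i \/ xs j = hi j) ->
  forall i j, i <> j -> lo i < xs i <= hi i -> lo j <= xs j < hi j ->
          g i / a i <= g j / a j.
Proof.
move=> H i j ij Hi Hj; apply Rnot_gt_le => G.
case: (H i j ij G) => E; lra.
Qed.

Definition bA k : bool := if Rlt_dec (lo k) (xs k) then true else false.
Definition bB k : bool := if Rlt_dec (xs k) (hi k) then true else false.

Lemma L53 : (forall i j, i <> j -> lo i < xs i <= hi i -> lo j <= xs j < hi j ->
          g i / a i <= g j / a j) ->
  exists lam, forall i, (xs i = lo i -> g i / a i >= lam) /\
                  (lo i < xs i < hi i -> g i / a i = lam) /\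
                  (xs i = hi i -> g i / a i <= lam).
Proof.
move=> H.
case: HxD => Hb _.
pose r k := g k / a k.
pose c := \big[Rmin/0]_(k < n | bB k) r k.
pose lam := \big[Rmax/c]_(k < n | bA k) r k.
have Hc : forall j, bB j -> c <= r j.
  move=> j Bj; rewrite /c.
  elim: (index_enum _) (mem_index_enum j) => // x s IH; rewrite inE big_cons => /orP [/eqP <-|Hs].
    rewrite Bj; apply Rmin_l.
  case: (bB x); last by apply IH.
  eapply Rle_trans; [apply Rmin_r| apply IH => //].
have HA : forall i, bA i -> r i <= lam.
  move=> i Ai; apply: bigRmax_ge => //; apply mem_index_enum.
have HB : forall j, bB j -> lam <= r j.
  move=> j Bj; apply: (big_ind (fun x => x <= r j)).
  - by apply Hc.
  - by move=> x y; apply Rmax_lub.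
  - move=> i Ai.
    case: (eqVneq i j) => [->|ij]; first by apply Rle_refl.
    apply H; first by apply/eqP.
      move: Ai; rewrite /bA; case: Rlt_dec => // ? _; have := Hb i; lra.
    move: Bj; rewrite /bB; case: Rlt_dec => // ? _; have := Hb j; lra.
exists lam => i; have := Hb i; have := Hlohi i => Hl [Hb1 Hb2].
split; [|split].
- move=> E; apply Rle_ge, HB; rewrite /bB; case: Rlt_dec => // N; exfalso; apply N; lra.
- move=> [E1 E2]; apply Rle_antisym.
    apply HA; rewrite /bA; case: Rlt_dec => // N; exfalso; apply N; lra.
  apply HB; rewrite /bB; case: Rlt_dec => // N; exfalso; apply N; lra.
- move=> E; apply HA; rewrite /bA; case: Rlt_dec => // N; exfalso; apply N; lra.
Qed.
End S.

Theorem proposition2p2 (n : nat) (lo hi a : vec n) (beta : R) (f : vec n -> R)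
  (Hlohi : forall i, lo i < hi i)
  (Ha : forall i, 0 < a i)
  (HD : exists x, in_D lo hi a beta x)
  (Hf : forall x, in_box lo hi x -> lipschitz_near f x)
  (xs : vec n) :
  let P1 := in_D lo hi a beta xs /\
      exists g, clarke_subdiff f xs g /\
        forall x, in_D lo hi a beta x -> 0 <= inner g (vsub x xs) in
  let P2 := in_D lo hi a beta xs /\
      exists g lam, clarke_subdiff f xs g /\
        forall x, in_box lo hi x -> 0 <= inner (vsub g (vscale lam a)) (vsub x xs) in
  let P3 := in_D lo hi a beta xs /\
      exists g lam, clarke_subdiff f xs g /\
        forall i, (xs i = lo i -> g i / a i >= lam) /\
                  (lo i < xs i < hi i -> g i / a i = lam) /\
                  (xs i = hi i -> g i / a i <= lam) in
  let P4 := in_D lo hi a beta xs /\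
      exists g, clarke_subdiff f xs g /\
        forall i j, i <> j -> g i / a i > g j / a j -> xs i = lo i \/ xs j = hi j in
  let P5 := in_D lo hi a beta xs /\
      exists g, clarke_subdiff f xs g /\
        forall i j, i <> j -> lo i < xs i <= hi i -> lo j <= xs j < hi j ->
          g i / a i <= g j / a j in
  (P1 <-> P2) /\ (P1 <-> P3) /\ (P1 <-> P4) /\ (P1 <-> P5).
Proof.
cbv zeta.
have h14 := fun g D H1 => L14 n lo hi a beta xs g Ha D H1.
have h45 := fun g H4 => L45 n lo hi a xs g H4.
have h53 := fun g D H5 => L53 n lo hi a beta xs g Hlohi D H5.
have h32 := fun g D lam H3 => L32 n lo hi a beta xs g Ha D lam H3.
have h21 := fun g D lam H2 => L21 n lo hi a beta xs g D lam H2.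
split; [|split; [|split]]; split.
- move=> [D [g [Hg H1]]]; have [lam H3] := h53 g D (h45 g (h14 g D H1)).
  split => //; exists g, lam; split => //; exact: h32.
- move=> [D [g [lam [Hg H2]]]]; split => //; exists g; split => //; exact: h21 H2.
- move=> [D [g [Hg H1]]]; have [lam H3] := h53 g D (h45 g (h14 g D H1)).
  split => //; exists g, lam; split => //.
- move=> [D [g [lam [Hg H3]]]]; split => //; exists g; split => //.
  exact: (h21 g D lam (h32 g D lam H3)).
- move=> [D [g [Hg H1]]]; split => //; exists g; split => //; exact: h14.
- move=> [D [g [Hg H4]]]; have [lam H3] := h53 g D (h45 g H4).
  split => //; exists g; split => //; exact: (h21 g D lam (h32 g D lam H3)).
- move=> [D [g [Hg H1]]]; split => //; exists g; split => //; exact: h45 (h14 g D H1).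
- move=> [D [g [Hg H5]]]; have [lam H3] := h53 g D H5.
  split => //; exists g; split => //; exact: (h21 g D lam (h32 g D lam H3)).
Qed.
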